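(* Let $(X,d_X)$, $(Y,d_Y)$ be metric spaces and $f:X\to X$, $g:Y\to Y$ maps. Suppose $h:X\to Y$ is a homeomorphism with $h\circ f=g\circ h$. Then for all $x,y\in X$, $x\,\mathcal{C}^+\,y$ (with respect to $f$) if and only if $h(x)\,\mathcal{C}^+\,h(y)$ (with respect to $g$).
   Context: For a metric space $(X,d)$ and a map $f:X\to X$, let $C(X,\mathbb{R}^+)$ be the set of continuous functions $\varepsilon:X\to(0,\infty)$. Write $x\,\mathcal{C}^+\,y$ if for every $\varepsilon\in C(X,\mathbb{R}^+)$ there are finitely many points $x_0=x,x_1,\dots,x_n=y$ in $X$, $n\in\mathbb{N}$, with $d(f(x_i),x_{i+1})<\varepsilon(f(x_i))$ for all $i=0,\dots,n-1$. *)

(* Defs.v *)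
From Stdlib Require Import Reals.
Open Scope R_scope.

Record MetricSpace := {
  carrier :> Type;
  dist : carrier -> carrier -> R;
  dist_nonneg : forall x y, 0 <= dist x y;
  dist_eq0 : forall x y, dist x y = 0 <-> x = y;
  dist_sym : forall x y, dist x y = dist y x;
  dist_tri : forall x y z, dist x z <= dist x y + dist y z
}.

Arguments dist {m} _ _.

Definition mcontinuous {X Y : MetricSpace} (h : X -> Y) : Prop :=
  forall x (e : R), 0 < e -> exists delta, 0 < delta /\
    forall y, dist x y < delta -> dist (h x) (h y) < e.

Definition rcontinuous {X : MetricSpace} (eps : X -> R) : Prop :=
  forall x (e : R), 0 < e -> exists delta, 0 < delta /\
    forall y, dist x y < delta -> Rabs (eps y - eps x) < e.

Definition pos_cont_fun {X : MetricSpace} (eps : X -> R) : Prop :=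
  rcontinuous eps /\ forall x, 0 < eps x.

Definition homeomorphism {X Y : MetricSpace} (h : X -> Y) : Prop :=
  exists k : Y -> X, mcontinuous h /\ mcontinuous k /\
    (forall x, k (h x) = x) /\ (forall y, h (k y) = y).

Definition CPlus {X : MetricSpace} (f : X -> X) (x y : X) : Prop :=
  forall eps : X -> R, pos_cont_fun eps ->
    exists (n : nat) (c : nat -> X),
      (1 <= n)%nat /\ c 0%nat = x /\ c n = y /\
      forall i, (i < n)%nat -> dist (f (c i)) (c (S i)) < eps (f (c i)).

(* Main.v *)
Require Import Defs.
From Stdlib Require Import Reals Lra Classical.
Open Scope R_scope.
Notation dist := Defs.dist.

Section Aux.
Variables (X Y : MetricSpace) (h : X -> Y) (eps : Y -> R).
Hypothesis hc : mcontinuous h.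
Hypothesis he : pos_cont_fun eps.

Definition G (z : X) (r : R) := forall b, dist z b < r -> dist (h z) (h b) < eps (h z).
Definition S (a : X) (r : R) := 0 <= r <= 1 /\ forall z, dist a z < r -> G z (r - dist a z).

Lemma G_mono z r r' : r' <= r -> G z r -> G z r'.
Proof. intros Hr HG b Hb. apply HG. lra. Qed.

Lemma S_bound a : bound (S a).
Proof. exists 1. intros r [Hr _]. lra. Qed.
Lemma S_ne a : exists r, S a r.
Proof. exists 0. split. lra. intros z Hz. pose proof (Defs.dist_nonneg _ a z). lra. Qed.

Definition delta (a : X) : R := proj1_sig (completeness (S a) (S_bound a) (S_ne a)).

Lemma delta_lub a : is_lub (S a) (delta a).
Proof. unfold delta. destruct completeness. simpl. auto. Qed.

Lemma delta_ge0 a : 0 <= delta a.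
Proof. destruct (delta_lub a) as [H1 _]. apply H1. split. lra. intros z Hz.
  pose proof (Defs.dist_nonneg _ a z). lra. Qed.

Lemma local a : exists r0, 0 < r0 /\ forall z, dist a z < r0 -> G z r0.
Proof.
  destruct he as [ec ep].
  destruct (ec (h a) (eps (h a) / 2)) as [eta [Heta Hw]]. pose proof (ep (h a)); lra.
  pose (m := Rmin eta (eps (h a) / 4)).
  assert (Hm : 0 < m). { unfold m. apply Rmin_pos; pose proof (ep (h a)); lra. }
  assert (Hm1 : m <= eta) by apply Rmin_l.
  assert (Hm2 : m <= eps (h a) / 4) by apply Rmin_r.
  destruct (hc a m Hm) as [r1 [Hr1 Hb]].
  exists (r1/2). split. lra.
  intros z Hz b Hzb.
  assert (Hab : dist a b < r1). { pose proof (Defs.dist_tri _ a z b). lra. }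
  pose proof (Hb b Hab). assert (Haz : dist a z < r1) by lra. pose proof (Hb z Haz).
  pose proof (Defs.dist_tri _ (h z) (h a) (h b)). rewrite (Defs.dist_sym _ (h z) (h a)) in H1.
  assert (dist (h a) (h z) < eta) by lra.
  pose proof (Hw _ H2) as Hw2. apply Rabs_def2 in Hw2. lra.
Qed.

Lemma delta_pos a : 0 < delta a.
Proof.
  destruct (local a) as [r0 [Hr0 Hl]].
  destruct (delta_lub a) as [H1 _].
  assert (S a (Rmin r0 1)).
  { split. split. apply Rlt_le, Rmin_pos; lra. apply Rmin_r.
    intros z Hz. pose proof (Rmin_l r0 1). apply G_mono with r0.
    pose proof (Defs.dist_nonneg _ a z). lra. apply Hl. lra. }
  apply H1 in H. pose proof (Rmin_pos r0 1). lra.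
Qed.

Lemma delta_good a b : dist a b < delta a -> dist (h a) (h b) < eps (h a).
Proof.
  intro Hab. destruct (delta_lub a) as [_ H2].
  destruct (classic (exists r, S a r /\ dist a b < r)) as [[r [[_ Hs] Hr]]|Hn].
  - assert (Hd : dist a a = 0) by (apply Defs.dist_eq0; auto).
    assert (0 < r) by (pose proof (Defs.dist_nonneg _ a b); lra).
    specialize (Hs a). rewrite Hd in Hs. apply Hs. lra. rewrite Rminus_0_r. exact Hr.
  - exfalso. assert (is_upper_bound (S a) (dist a b)).
    { intros r Hr. destruct (Rle_dec r (dist a b)); auto. exfalso. apply Hn. exists r. split; auto. lra. }
    apply H2 in H. lra.
Qed.

Lemma delta_lip a a' : delta a - dist a a' <= delta a'.
Proof.
  apply Rnot_lt_le. intro Hc.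
  destruct (delta_lub a) as [_ H2]. destruct (delta_lub a') as [H1' _].
  destruct (classic (exists r, S a r /\ delta a' + dist a a' < r)) as [[r [[Hr Hs] Hr2]]|Hn].
  - assert (S a' (r - dist a a')).
    { pose proof (delta_ge0 a'). split. split. lra. destruct Hr; pose proof (Defs.dist_nonneg _ a a'); lra.
      intros z Hz. pose proof (Defs.dist_tri _ a a' z).
      apply G_mono with (r - dist a z). lra. apply Hs. lra. }
    apply H1' in H. lra.
  - assert (is_upper_bound (S a) (delta a' + dist a a')).
    { intros r Hr. apply Rnot_lt_le. intro. apply Hn. eauto. }
    apply H2 in H. lra.
Qed.

Lemma delta_pc : pos_cont_fun delta.
Proof.
  split; [|exact delta_pos].
  intros x e He. exists e. split; auto. intros y Hy.
  pose proof (delta_lip x y). pose proof (delta_lip y x). rewrite Defs.dist_sym in H0.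
  apply Rabs_def1; lra.
Qed.

End Aux.

Lemma transfer (X Y : MetricSpace) (h : X -> Y) (eps : Y -> R) :
  mcontinuous h -> pos_cont_fun eps ->
  exists d : X -> R, pos_cont_fun d /\
    forall a b, dist a b < d a -> dist (h a) (h b) < eps (h a).
Proof.
  intros hc he. exists (delta X Y h eps). split.
  apply delta_pc; auto. intros a b. apply delta_good; auto.
Qed.

Theorem lemma4p1 (X Y : MetricSpace) (f : X -> X) (g : Y -> Y) (h : X -> Y) :
  homeomorphism h ->
  (forall x, h (f x) = g (h x)) ->
  forall x y : X, CPlus f x y <-> CPlus g (h x) (h y).
Proof.
  intros [k [hc [kc [kh hk]]]] Hc x y. split.
  - intros Hp eps He. destruct (transfer X Y h eps hc He) as [d [Hd Hg]].
    destruct (Hp d Hd) as [n [c [Hn [H0 [H1 Hi]]]]].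
    exists n, (fun i => h (c i)). split; auto. split. rewrite H0; auto. split. rewrite H1; auto.
    intros i Hi'. rewrite <- Hc. apply Hg. apply Hi; auto.
  - intros Hp eps He. destruct (transfer Y X k eps kc He) as [d [Hd Hg]].
    destruct (Hp d Hd) as [n [c [Hn [H0 [H1 Hi]]]]].
    exists n, (fun i => k (c i)). split; auto. split. rewrite H0; auto. split. rewrite H1; auto.
    intros i Hi'.
    assert (E : f (k (c i)) = k (g (c i))).
    { rewrite <- (kh (f (k (c i)))). rewrite Hc, hk. reflexivity. }
    rewrite E. apply Hg. apply Hi; auto.
Qed.
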